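(* Let $R$ be an amenable affine algebra over a field $K$ with no zero divisors. Then $R$ has Goldie dimension $1$, i.e. any two nonzero left ideals $I,J$ of $R$ satisfy $I\cap J\neq 0$.
   Context: An affine algebra is a finitely generated associative algebra over $K$, not necessarily unital. $R$ is amenable if there exist finite-dimensional $K$-subspaces $W_1\subseteq W_2\subseteq\cdots$ with $\bigcup_nW_n=R$ such that for every $r\in R$, $\lim_{n\to\infty}\dim_K(W_nr+W_n)/\dim_K(W_n)=1$. *)

(* Defs.v *)
(* A (possibly non-unital) associative K-algebra is given by a
   K-vector space A (lmodType K) together with a bilinear associative product. *)
From HB Require Import structures.
From mathcomp Require Import all_boot all_order all_algebra.
Set Implicit Arguments. Unset Strict Implicit. Unset Printing Implicit Defensive.
Import Order.TTheory GRing.Theory Num.Theory.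
Local Open Scope ring_scope.

Section AlgDefs.
Variables (K : fieldType) (A : lmodType K) (mul : A -> A -> A).

Definition is_algebra : Prop :=
  [/\ forall x y z, mul x (mul y z) = mul (mul x y) z,
      forall (a : K) x y z, mul (a *: x + y) z = a *: mul x z + mul y z
    & forall (a : K) x y z, mul z (a *: x + y) = a *: mul z x + mul z y].

Definition subalgebra (S : A -> Prop) : Prop :=
  [/\ S 0, forall x y, S x -> S y -> S (x + y),
      forall (a : K) x, S x -> S (a *: x)
    & forall x y, S x -> S y -> S (mul x y)].

Definition affine : Prop :=
  exists gens : seq A, forall x : A,
    forall S : A -> Prop, subalgebra S -> (forall g, g \in gens -> S g) -> S x.

Definition no_zero_divisors : Prop :=
  forall x y : A, mul x y = 0 -> x = 0 \/ y = 0.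

Definition span (s : seq A) : A -> Prop :=
  fun x => exists c : 'I_(size s) -> K, x = \sum_(i < size s) c i *: s`_i.

Definition lin_indep (s : seq A) : Prop :=
  forall c : 'I_(size s) -> K,
    \sum_(i < size s) c i *: s`_i = 0 -> forall i, c i = 0.

Definition has_dim (W : A -> Prop) (d : nat) : Prop :=
  exists s : seq A, [/\ size s = d, lin_indep s & forall x, W x <-> span s x].

Definition subsp_Wr_plus_W (W : A -> Prop) (r : A) : A -> Prop :=
  fun y => exists w1 w2, [/\ W w1, W w2 & y = mul w1 r + w2].

(* amenability: finite-dimensional subspaces W_1 <= W_2 <= ... exhausting A
   with dim(W_n r + W_n)/dim(W_n) -> 1 for every r *)
Definition amenable : Prop :=
  exists (W : nat -> A -> Prop) (dW : nat -> nat) (dWr : A -> nat -> nat),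
    [/\ forall n, has_dim (W n) (dW n),
        forall n x, W n x -> W n.+1 x,
        forall x, exists n, W n x,
        forall r n, has_dim (subsp_Wr_plus_W (W n) r) (dWr r n)
      & forall (r : A) (eps : rat), 0 < eps -> exists N : nat, forall n : nat,
          (N <= n)%N -> `|((dWr r n)%:R / (dW n)%:R : rat) - 1| < eps].

Definition left_ideal (I : A -> Prop) : Prop :=
  [/\ I 0, forall x y, I x -> I y -> I (x + y),
      forall (a : K) x, I x -> I (a *: x)
    & forall r x, I x -> I (mul r x)].

Definition nonzero_set (I : A -> Prop) : Prop := exists x, I x /\ x <> 0.

End AlgDefs.

(* Main.v *)
Require Import Defs.
From mathcomp Require Import all_boot all_order all_algebra.
From mathcomp Require Import lra zify.
From Stdlib Require Import ClassicalEpsilon Classical_Prop.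
Set Implicit Arguments. Unset Strict Implicit. Unset Printing Implicit Defensive.
Import Order.TTheory GRing.Theory Num.Theory.
Local Open Scope ring_scope.
Lemma free_bound3 (K : fieldType) d N (g1 g2 g3 : 'I_d -> 'rV[K]_N) :
  (forall k1 k2 k3 : 'I_d -> K,
     \sum_i k1 i *: g1 i + \sum_i k2 i *: g2 i + \sum_i k3 i *: g3 i = 0 ->
     forall i, [/\ k1 i = 0, k2 i = 0 & k3 i = 0]) ->
  (d + d + d <= N)%N.
Proof.
move=> H.
pose M := col_mx (col_mx (\matrix_(i < d) g1 i) (\matrix_(i < d) g2 i))
                 (\matrix_(i < d) g3 i).
suff : row_free M by rewrite /row_free => /eqP <-; exact: rank_leq_col.
rewrite -kermx_eq0; apply/rowV0P => v /sub_kermxP.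
rewrite -[v]hsubmxK -[lsubmx v]hsubmxK !mul_row_col !mulmx_sum_row.
move=> Hv.
have Hk := H (fun i => lsubmx (lsubmx v) 0 i) (fun i => rsubmx (lsubmx v) 0 i)
  (fun i => rsubmx v 0 i).
have {}Hk : forall i, [/\ lsubmx (lsubmx v) 0 i = 0, rsubmx (lsubmx v) 0 i = 0 & rsubmx v 0 i = 0].
  apply: Hk; rewrite -{}[RHS]Hv; congr (_ + _ + _); apply: eq_bigr => i _; by rewrite rowK.
have E1 : lsubmx (lsubmx v) = 0 by apply/rowP => i; case: (Hk i) => -> _ _; rewrite mxE.
have E2 : rsubmx (lsubmx v) = 0 by apply/rowP => i; case: (Hk i) => _ -> _; rewrite mxE.
have E3 : rsubmx v = 0 by apply/rowP => i; case: (Hk i) => _ _ ->; rewrite mxE.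
by rewrite E1 E2 E3 !row_mx0.
Qed.

Lemma fchoice_ (T U : Type) (P : T -> U -> Prop) :
  (forall t, exists u, P t u) -> exists f : T -> U, forall t, P t (f t).
Proof.
move=> H; exists (fun t => proj1_sig (constructive_indefinite_description _ (H t))).
move=> t; exact: proj2_sig (constructive_indefinite_description _ (H t)).
Qed.

Lemma ratio_bound (x d : nat) :
  `|x%:R / d%:R - 1 : rat| < 1/2 -> (0 < d)%N /\ (x * 2 < 3 * d)%N.
Proof.
have [->|dp] := posnP d.
  by rewrite invr0 mulr0 sub0r normrN normr1.
move=> /ltr_normlP [_]; rewrite ltrBlDr ltr_pdivrMr ?ltr0n // => h.
split => //.
have : ((x * 2)%:R < (3 * d)%:R :> rat) by rewrite !natrM; lra.
by rewrite ltr_nat.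
Qed.

Section Alg.
Variables (K : fieldType) (A : lmodType K) (mul : A -> A -> A).
Hypothesis hl : forall (a : K) x y z, mul (a *: x + y) z = a *: mul x z + mul y z.

Lemma mul0l_ z : mul 0 z = 0.
Proof.
have h := hl 1 0 0 z; rewrite !scale1r addr0 in h.
by apply: (addrI (mul 0 z)); rewrite addr0 -h.
Qed.

Lemma mul_suml_ n (k : 'I_n -> K) (x : 'I_n -> A) z :
  mul (\sum_i k i *: x i) z = \sum_i k i *: mul (x i) z.
Proof.
elim: n k x => [|n IH] k x; first by rewrite !big_ord0 mul0l_.
rewrite !big_ord_recr /= addrC hl.
by rewrite (IH (fun i => k (widen_ord (leqnSn n) i)) (fun i => x (widen_ord (leqnSn n) i))) addrC.
Qed.

Lemma span_nth_ (s : seq A) i : (i < size s)%N -> Defs.span s s`_i.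
Proof.
move=> h; exists (fun j => (j == Ordinal h)%:R).
rewrite (bigD1 (Ordinal h)) //= eqxx scale1r big1 ?addr0 // => j /negbTE ->.
by rewrite scale0r.
Qed.

Lemma span0_ (s : seq A) : Defs.span s 0.
Proof. by exists (fun _ => 0); rewrite big1 // => j _; rewrite scale0r. Qed.

Lemma sum_exch_ n m (k : 'I_n -> K) (c : 'I_n -> 'I_m -> K) (s : 'I_m -> A) :
  \sum_i k i *: \sum_j c i j *: s j = \sum_j (\sum_i k i * c i j) *: s j.
Proof.
under eq_bigr do rewrite scaler_sumr.
rewrite exchange_big; apply: eq_bigr => j _; rewrite scaler_suml.
by apply: eq_bigr => i _; rewrite scalerA.
Qed.

End Alg.

Theorem proposition6 (K : fieldType) (A : lmodType K) (mul : A -> A -> A) :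
  is_algebra mul -> affine mul -> no_zero_divisors mul -> amenable mul ->
  forall I J : A -> Prop,
    left_ideal mul I -> left_ideal mul J -> nonzero_set I -> nonzero_set J ->
    exists x : A, [/\ I x, J x & x <> 0].
Proof.
move=> [_ hl _] _ hnz [W [dW [dWr [hdim _ _ hdr hlim]]]] I J
  [_ _ hIZ hIM] [_ _ hJZ hJM] [a [Ia a0]] [b [Jb b0]].
apply: NNPP => hno.
have H0 : forall x, I x -> J x -> x = 0.
  by move=> x Ix Jx; apply: NNPP => nx; apply: hno; exists x.
have [Na hNa] := hlim a (1/2) (ltac:(by [])).
have [Nb hNb] := hlim b (1/2) (ltac:(by [])).
pose n := maxn Na Nb.
have := hNa n (leq_maxl _ _); have := hNb n (leq_maxr _ _).
have [w [hw hwi hwW]] := hdim n.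
have [sa [hsa hsai hsaW]] := hdr a n.
have [sb [hsb hsbi hsbW]] := hdr b n.
rewrite -hw -hsa -hsb => Rb Ra.
have [dpos ha] := ratio_bound Ra.
have [_ hb] := ratio_bound Rb.
have Wn0 : W n 0 by apply/hwW; exact: span0_.
have Wni : forall i : 'I_(size w), W n w`_i by move=> i; apply/hwW; exact: span_nth_.
have [ca1 Hca1] : exists c : 'I_(size w) -> 'I_(size sa) -> K,
    forall i : 'I_(size w), mul w`_i a = \sum_(j < size sa) c i j *: sa`_j.
  apply: (fchoice_ (P := fun (i : 'I_(size w)) (c : 'I_(size sa) -> K) => mul w`_i a = \sum_(j < size sa) c j *: sa`_j)) => i; apply: (proj1 (hsaW _)).
  by exists w`_i, 0; split => //; rewrite addr0.
have [ca0 Hca0] : exists c : 'I_(size w) -> 'I_(size sa) -> K,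
    forall i : 'I_(size w), w`_i = \sum_(j < size sa) c i j *: sa`_j.
  apply: (fchoice_ (P := fun (i : 'I_(size w)) (c : 'I_(size sa) -> K) => w`_i = \sum_(j < size sa) c j *: sa`_j)) => i; apply: (proj1 (hsaW _)).
  by exists 0, w`_i; split => //; rewrite (mul0l_ hl) add0r.
have [cb1 Hcb1] : exists c : 'I_(size w) -> 'I_(size sb) -> K,
    forall i : 'I_(size w), mul w`_i b = \sum_(j < size sb) c i j *: sb`_j.
  apply: (fchoice_ (P := fun (i : 'I_(size w)) (c : 'I_(size sb) -> K) => mul w`_i b = \sum_(j < size sb) c j *: sb`_j)) => i; apply: (proj1 (hsbW _)).
  by exists w`_i, 0; split => //; rewrite addr0.
have [cb0 Hcb0] : exists c : 'I_(size w) -> 'I_(size sb) -> K,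
    forall i : 'I_(size w), w`_i = \sum_(j < size sb) c i j *: sb`_j.
  apply: (fchoice_ (P := fun (i : 'I_(size w)) (c : 'I_(size sb) -> K) => w`_i = \sum_(j < size sb) c j *: sb`_j)) => i; apply: (proj1 (hsbW _)).
  by exists 0, w`_i; split => //; rewrite (mul0l_ hl) add0r.
pose g1 i : 'rV[K]_(size sa + size sb) := row_mx (\row_j ca1 i j) 0.
pose g2 i : 'rV[K]_(size sa + size sb) := row_mx 0 (\row_j cb1 i j).
pose g3 i : 'rV[K]_(size sa + size sb) := row_mx (\row_j ca0 i j) (- \row_j cb0 i j).
suff : (size w + size w + size w <= size sa + size sb)%N by lia.
apply: (@free_bound3 K _ _ g1 g2 g3) => k1 k2 k3 Hsum.
have eA : forall j, \sum_i k1 i * ca1 i j + \sum_i k3 i * ca0 i j = 0.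
  move=> j; have := congr1 (fun M : 'rV_ _ => M 0 (lshift (size sb) j)) Hsum.
  rewrite /= !mxE !summxE => E; rewrite -[RHS]E.
  rewrite [X in _ = _ + X + _]big1 ?addr0; last first.
    by move=> i _; rewrite mxE /g2 row_mxEl mxE mulr0.
  by congr (_ + _); apply: eq_bigr => i _; rewrite mxE /g1 /g3 row_mxEl mxE.
have eB : forall j, \sum_i k2 i * cb1 i j + \sum_i k3 i * - cb0 i j = 0.
  move=> j; have := congr1 (fun M : 'rV_ _ => M 0 (rshift (size sa) j)) Hsum.
  rewrite /= !mxE !summxE => E; rewrite -[RHS]E.
  rewrite [X in _ = X + _ + _]big1 ?add0r; last first.
    by move=> i _; rewrite mxE /g1 row_mxEr mxE mulr0.
  by congr (_ + _); apply: eq_bigr => i _; rewrite mxE /g2 /g3 row_mxEr !mxE.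
have EA : \sum_i k1 i *: mul w`_i a + \sum_i k3 i *: w`_i = 0.
  rewrite (eq_bigr (fun i => k1 i *: \sum_j ca1 i j *: sa`_j)); last by move=> i _; rewrite Hca1.
  rewrite [X in _ + X](eq_bigr (fun i => k3 i *: \sum_j ca0 i j *: sa`_j)); last by move=> i _; rewrite -Hca0.
  rewrite !sum_exch_ -big_split big1 // => j _.
  by rewrite /= -scalerDl eA scale0r.
have EB : \sum_i k2 i *: mul w`_i b + \sum_i k3 i *: - w`_i = 0.
  rewrite (eq_bigr (fun i => k2 i *: \sum_j cb1 i j *: sb`_j)); last by move=> i _; rewrite Hcb1.
  rewrite [X in _ + X](eq_bigr (fun i => k3 i *: \sum_j - cb0 i j *: sb`_j)); last first.
    by move=> i _; rewrite (Hcb0 i) -sumrN; congr (_ *: _); apply: eq_bigr => j _; rewrite scaleNr.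
  rewrite !sum_exch_ -big_split big1 // => j _.
  by rewrite /= -scalerDl eB scale0r.
have E : mul (\sum_i k1 i *: w`_i) a + mul (\sum_i k2 i *: w`_i) b = 0.
  rewrite !(mul_suml_ hl).
  have := congr1 (fun x => x) (f_equal2 (fun x y => x + y) EA EB).
  have Z : \sum_i k3 i *: w`_i + \sum_i k3 i *: - w`_i = 0.
    by rewrite -big_split big1 // => i _; rewrite /= scalerN subrr.
  by rewrite addr0 addrACA Z addr0 => ->.
have Eu : mul (\sum_i k1 i *: w`_i) a = 0.
  apply: H0; first exact: hIM.
  have -> : mul (\sum_i k1 i *: w`_i) a = (-1 : K) *: mul (\sum_i k2 i *: w`_i) b.
    by rewrite scaleN1r; apply/eqP; rewrite -addr_eq0 E.
  by apply: hJZ; apply: hJM.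
have Ev : mul (\sum_i k2 i *: w`_i) b = 0 by move: E; rewrite Eu add0r.
have u0 : \sum_i k1 i *: w`_i = 0 by case: (hnz _ _ Eu).
have v0 : \sum_i k2 i *: w`_i = 0 by case: (hnz _ _ Ev).
have k30 : \sum_i k3 i *: w`_i = 0.
  by move: EA; rewrite -(mul_suml_ hl k1 (fun i => w`_i) a) u0 (mul0l_ hl) add0r.
by move=> i; split; [exact: (hwi _ u0 i) | exact: (hwi _ v0 i) | exact: (hwi _ k30 i)].
Qed.
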